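(* We have $\liminf_{n\to\infty}\deg(\mathscr B:\mathrm{Part}(n)\to\mathrm{Part}(n))\geq 2$. Moreover, for every positive integer $n$, \[\deg(\mathscr B:\mathrm{Part}(n)\to\mathrm{Part}(n))\leq\left\lfloor\frac{1+\sqrt{\tfrac{8}{3}n+1}}{2}\right\rfloor.\]
   Context: For finite sets $X,Y$ and $f:X\to Y$, $\deg(f)=\frac{1}{|X|}\sum_{y\in Y}|f^{-1}(y)|^2$. $\mathrm{Part}(n)$ is the set of partitions of $n$, i.e. tuples $(\lambda_1,\dots,\lambda_\ell)$ of positive integers in nonincreasing order summing to $n$. Bulgarian solitaire $\mathscr B:\mathrm{Part}(n)\to\mathrm{Part}(n)$ sends $\lambda=(\lambda_1,\ldots,\lambda_\ell)$ to the partition obtained by arranging the numbers $\ell,\lambda_1-1,\ldots,\lambda_\ell-1$ in nonincreasing order and deleting any zeros. For example, $\mathscr B(8,3,3,1,1)=(7,5,2,2)$. *)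

(* Defs.v *)
From mathcomp Require Import all_boot all_order all_algebra.
Set Implicit Arguments. Unset Strict Implicit. Unset Printing Implicit Defensive.
Import Order.TTheory GRing.Theory Num.Theory.

Definition is_part (n : nat) (s : seq nat) : bool :=
  [&& sorted geq s, all (fun x => 0 < x) s & sumn s == n].

Fixpoint cands (n k : nat) : seq (seq nat) :=
  if k is k'.+1 then [::] :: [seq x :: s | x <- iota 1 n, s <- cands n k']
  else [:: [::]].

Definition parts (n : nat) : seq (seq nat) := [seq s <- cands n n | is_part n s].

Definition Part (n : nat) := seq_sub (parts n).

Definition bulg (s : seq nat) : seq nat :=
  sort geq [seq x <- size s :: map predn s | 0 < x].

Lemma cands_mem n k s : size s <= k -> all (fun x => 0 < x <= n) s -> s \in cands n k.
Proof.
elim: k s => [|k IH] [|x s] //= Hs /andP[Hx Hall].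
rewrite in_cons /=; apply/allpairsP; exists (x, s) => /=; split => //.
  by rewrite mem_iota add1n ltnS.
exact: IH.
Qed.

Lemma part_bounds n s : is_part n s -> size s <= n /\ all (fun x => 0 < x <= n) s.
Proof.
case/and3P=> _ Hpos /eqP <-.
elim: s Hpos => [|x s IH] //= /andP[Hx Hp]; have [H1 H2] := IH Hp.
split; first by rewrite -add1n leq_add.
rewrite Hx leq_addr /=; apply: sub_all H2 => y /andP[-> Hy] /=.
exact: leq_trans Hy (leq_addl _ _).
Qed.

Lemma mem_parts n s : (s \in parts n) = is_part n s.
Proof.
rewrite mem_filter; case H: (is_part n s) => //=.
by have [H1 H2] := part_bounds H; exact: cands_mem.
Qed.

Lemma sumn_filter_pos (l : seq nat) : sumn [seq x <- l | 0 < x] = sumn l.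
Proof. by elim: l => [|[|x] l IH] //=; rewrite IH. Qed.

Lemma sumn_pred (s : seq nat) : all (fun x => 0 < x) s -> size s + sumn (map predn s) = sumn s.
Proof.
elim: s => [|x s IH] //= /andP[Hx Hs]; rewrite -(IH Hs).
by case: x Hx => // x _ /=; rewrite addSn addnCA addSn.
Qed.

Lemma bulg_part n s : is_part n s -> is_part n (bulg s).
Proof.
case/and3P=> _ Hpos Hsum; apply/and3P; split.
- by apply: sort_sorted => x y; exact: leq_total.
- by rewrite (perm_all _ (permEl (perm_sort _ _))) filter_all.
- rewrite (perm_sumn (permEl (perm_sort _ _))) sumn_filter_pos /= sumn_pred //.
Qed.

Lemma bulg_mem n (x : Part n) : bulg (ssval x) \in parts n.
Proof. by rewrite mem_parts; apply: bulg_part; rewrite -mem_parts; exact: ssvalP. Qed.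

Definition B (n : nat) (x : Part n) : Part n := SeqSub (bulg_mem x).

Definition deg (X Y : finType) (f : X -> Y) : rat :=
  (\sum_(y : Y) (#|[set x | f x == y]|%:R) ^+ 2) / (#|X|%:R).

Definition degB (n : nat) : rat := deg (@B n).

(* Main.v *)
Require Import Defs.
From mathcomp Require Import all_boot all_order all_algebra.
From mathcomp Require Import all_classical all_reals all_analysis.
From mathcomp Require Import lra zify.
Set Implicit Arguments. Unset Strict Implicit. Unset Printing Implicit Defensive.

Lemma uniq_cands n k : uniq (cands n k).
Proof.
elim: k => [|k IH] //=; apply/andP; split.
  by apply/negP => /allpairsP[[x s] /= [_ _]].
rewrite allpairs_uniq ?iota_uniq // => -[x s] [y t] _ _ /= [-> ->] //.
Qed.

Lemma uniq_parts n : uniq (parts n).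
Proof. exact/filter_uniq/uniq_cands. Qed.

Lemma sum_Part n (F : seq nat -> nat) :
  \sum_(x : Part n) F (ssval x) = \sum_(s <- parts n) F s.
Proof.
have E := val_seq_sub_enum (uniq_parts n).
have H : index_enum (Part n) = seq_sub_enum (parts n).
  by rewrite /index_enum unlock /= unlock.
by rewrite -[in RHS]E big_map H.
Qed.

Lemma sum_nat_bool (T : Type) (l : seq T) (Q : pred T) : \sum_(s <- l) (Q s : nat) = count Q l.
Proof. by elim: l => [|x l IH]; rewrite ?big_nil ?big_cons //= IH. Qed.

Lemma card_Part n : #|{: Part n}| = size (parts n).
Proof. exact/card_seq_sub/uniq_parts. Qed.

Lemma card_setP n (Q : pred (seq nat)) :
  #|[set x : Part n | Q (ssval x)]| = count Q (parts n).
Proof.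
rewrite -sum1_card big_mkcond /=.
rewrite (eq_bigr (fun x : Part n => nat_of_bool (Q (ssval x)))); last by move=> x _; rewrite inE; case: (Q _).
rewrite (@sum_Part n (fun s => nat_of_bool (Q s))). exact: sum_nat_bool.
Qed.

Lemma count_inj (T U : eqType) (A : seq T) (Bs : seq U) (P : pred T) (Q : pred U) (f : T -> U) :
  uniq A -> (forall x y, x \in A -> P x -> y \in A -> P y -> f x = f y -> x = y) ->
  (forall x, x \in A -> P x -> (f x \in Bs) && Q (f x)) -> count P A <= count Q Bs.
Proof.
move=> UA Hinj Hf; rewrite -!size_filter -(size_map f).
apply: uniq_leq_size.
  rewrite map_inj_in_uniq ?filter_uniq // => x y; rewrite !mem_filter => /andP[Px Ax] /andP[Py Ay].
  exact: Hinj.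
move=> z /mapP[x]; rewrite mem_filter => /andP[Px Ax] ->.
by rewrite mem_filter; case/andP: (Hf x Ax Px) => -> ->.
Qed.

Lemma count_inj_tag (T U : eqType) (A : seq T) (Bs : seq U) (P : pred T) (Q : pred U)
  (f : T -> U) (g : T -> nat) k :
  uniq A -> (forall x y, x \in A -> P x -> y \in A -> P y -> f x = f y -> g x = g y -> x = y) ->
  (forall x, x \in A -> P x -> [&& f x \in Bs, Q (f x) & g x < k]) -> count P A <= k * count Q Bs.
Proof.
move=> UA Hinj Hf.
have -> : k * count Q Bs = count predT [seq (y, i) | y <- seq.filter Q Bs, i <- iota 0 k].
  by rewrite count_predT size_allpairs size_filter size_iota mulnC.
apply: (@count_inj _ _ _ _ _ _ (fun x => (f x, g x))) => //.
  by move=> x y Ax Px Ay Py [] /Hinj; apply.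
move=> x Ax Px; case/and3P: (Hf x Ax Px) => B1 B2 B3; rewrite andbT.
by apply/allpairsP; exists (f x, g x) => /=; rewrite mem_filter B1 B2 mem_iota.
Qed.

Lemma geq_trans : transitive geq.
Proof. by move=> x y z /= H1 H2; apply: leq_trans H2 H1. Qed.
Lemma geq_anti : antisymmetric geq.
Proof. by move=> x y /= H; apply/anti_leq; rewrite andbC. Qed.
Lemma geq_total : total geq.
Proof. by move=> x y /=; rewrite leq_total. Qed.

Lemma sorted_geq_head (s : seq nat) : sorted geq s -> all (fun x => x <= head 0 s) s.
Proof.
case: s => [|x s] //= Hs; rewrite leqnn /=.
exact: (order_path_min geq_trans Hs).
Qed.

Lemma sorted_split0 (u : seq nat) : sorted geq u ->
  u = seq.filter (fun x => 0 < x) u ++ nseq (count (pred1 0) u) 0.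
Proof.
elim: u => [|x u IH] //= Hs.
have Hu : sorted geq u := path_sorted Hs.
case: x Hs => [|x] Hs /=.
  have Ha := order_path_min geq_trans Hs.
  have H0 : all (pred1 0) u by apply: sub_all Ha => y; rewrite /= leqn0.
  rewrite (@eq_in_filter _ _ pred0) ?filter_pred0; last by move=> y /(allP H0) /= /eqP ->.
  have Hc : count (pred1 0) u = size u by apply/eqP; rewrite -all_count.
  by rewrite /= Hc add0n -(all_pred1P _ _ H0).
by rewrite add0n -IH.
Qed.

Lemma pred_sorted (s : seq nat) : sorted geq s -> sorted geq (map predn s).
Proof. by apply: homo_sorted => x y /=; lia. Qed.

Lemma succ_pred_map (u : seq nat) : all (fun x => 0 < x) u -> map succn (map predn u) = u.
Proof. by elim: u => [|x u IH] //= /andP[Hx Hu]; rewrite IH // prednK. Qed.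

Lemma perm_bulg (s : seq nat) : perm_eq (bulg s) [seq x <- size s :: map predn s | 0 < x].
Proof. exact: permEl (perm_sort _ _). Qed.

Lemma bulg_inj s t n m : is_part n s -> is_part m t -> bulg s = bulg t -> size s = size t -> s = t.
Proof.
move=> /and3P[Ss Ps _] /and3P[St Pt _] Hb Hsz.
have Hp : perm_eq [seq x <- size s :: map predn s | 0 < x] [seq x <- size t :: map predn t | 0 < x].
  apply: (@perm_trans _ (bulg s)); first by rewrite perm_sym perm_bulg.
  by rewrite Hb perm_bulg.
move: Hp; case Hs0 : (size s) => [|l] Hp.
  move: Hsz; rewrite Hs0 => /esym/eqP; rewrite size_eq0 => /eqP ->.
  by move/eqP: Hs0; rewrite size_eq0 => /eqP ->.
rewrite -Hsz Hs0 /= perm_cons in Hp.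
have Sps := pred_sorted Ss; have Spt := pred_sorted St.
have Ef := sorted_eq geq_trans geq_anti (sorted_filter geq_trans _ Sps) (sorted_filter geq_trans _ Spt) Hp.
have Ec : count (pred1 0) (map predn s) = count (pred1 0) (map predn t).
  have := congr1 size (sorted_split0 Sps); have := congr1 size (sorted_split0 Spt).
  rewrite !size_cat !size_nseq !size_map Ef -Hsz => ->; lia.
rewrite -(succ_pred_map Ps) -(succ_pred_map Pt); congr map.
by rewrite (sorted_split0 Sps) (sorted_split0 Spt) Ef Ec.
Qed.

Definition dval (y : seq nat) := count (fun v => size y <= v.+1) (undup y).

Lemma part_size_gt0 n s : 0 < n -> is_part n s -> 0 < size s.
Proof. by case: s => [|x s] // Hn /and3P[_ _ /eqP H]; rewrite -H in Hn. Qed.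

Lemma fiber_le n (y : Part n) : 0 < n -> #|[set x : Part n | B x == y]| <= dval (ssval y).
Proof.
move=> Hn.
have -> : [set x | B x == y] = [set x : Part n | bulg (ssval x) == ssval y].
  by apply/setP => x; rewrite !inE.
rewrite (@card_setP n (fun s => bulg s == ssval y)).
apply: (@count_inj _ _ _ _ _ _ size (uniq_parts n)).
  move=> s t; rewrite !mem_parts => Hs /eqP E1 Ht /eqP E2 Hsz.
  by apply: (bulg_inj Hs Ht) => //; rewrite E1 E2.
move=> s; rewrite mem_parts => Hs /eqP E; rewrite mem_undup -E.
rewrite mem_sort mem_filter /= (part_size_gt0 Hn Hs) /= in_cons eqxx /=.
rewrite size_sort size_filter /= (part_size_gt0 Hn Hs) add1n ltnS.
by rewrite -(size_map predn s) count_size.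
Qed.

Lemma sumn_subseq (s1 s2 : seq nat) : subseq s1 s2 -> sumn s1 <= sumn s2.
Proof.
elim: s2 s1 => [|y s2 IH] [|x s1] //=.
case: eqP => [-> /IH|_ /IH /= H]; first by rewrite leq_add2l.
by apply: leq_trans H (leq_addl _ _).
Qed.

Lemma exists_max (u : seq nat) : u != [::] -> exists2 M, M \in u & all (fun x => x <= M) u.
Proof.
elim: u => [|x u IH] // _; case: u IH => [|y u] IH.
  by exists x; rewrite ?mem_seq1 //= leqnn.
have [M HM HA] := IH isT.
case: (leqP x M) => H.
  exists M; first by rewrite in_cons HM orbT.
  by rewrite /= H.
exists x; rewrite ?in_cons ?eqxx //= leqnn /=.
by apply: sub_all HA => z Hz; apply: leq_trans Hz (ltnW H).
Qed.

Lemma uniq_sum_lb (a : nat) (u : seq nat) : uniq u -> all (fun x => a <= x) u ->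
  size u * (size u).-1 + 2 * a * size u <= 2 * sumn u.
Proof.
move Hk : (size u) => k; elim: k u Hk => [|k IH] u Hk Uu Au; first by rewrite muln0.
have : u != [::] by rewrite -size_eq0 Hk.
case/exists_max => M HM HA.
have HMk : a + k <= M.
  have : size u <= size (iota a (M - a).+1).
    apply: uniq_leq_size => // z Hz; rewrite mem_iota.
    have := allP Au z Hz; have := allP HA z Hz; lia.
  rewrite size_iota Hk.
  have := allP Au M HM; lia.
have Pu := perm_to_rem HM.
have Hs : sumn u = M + sumn (rem M u) by rewrite (perm_sumn Pu).
have Hsz : size (rem M u) = k by rewrite size_rem // Hk.
have Ar : all (fun x => a <= x) (rem M u).
  by apply/allP => z /mem_rem Hz; apply: (allP Au).
have := IH (rem M u) Hsz (rem_uniq _ Uu) Ar.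
rewrite Hs /=; nia.
Qed.

Lemma dval_bound n s : is_part n s -> 3 * (dval s * (dval s).-1) <= 2 * n.
Proof.
case/and3P=> _ _ /eqP Hsum.
set u := seq.filter (fun v => size s <= v.+1) (undup s).
have Hd : dval s = size u by rewrite /dval size_filter.
have Uu : uniq u by rewrite filter_uniq ?undup_uniq.
have Au : all (fun x => (size s).-1 <= x) u.
  by apply/allP => z; rewrite mem_filter => /andP[H _]; lia.
have Hsz : size u <= size s.
  by rewrite /u size_filter (leq_trans (count_size _ _)) // size_undup.
have Hsu : sumn u <= n.
  by rewrite -Hsum; apply: sumn_subseq; apply: subseq_trans (filter_subseq _ _) (undup_subseq _).
have := uniq_sum_lb Uu Au.
rewrite Hd; move: Hsz Hsu; set k := size u; set m := size s => H1 H2 H3.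
have H4 : k.-1 <= m.-1 by lia.
nia.
Qed.

Definition pconj (s : seq nat) := [seq count (fun x => i < x) s | i <- iota 0 (head 0 s)].

Lemma count_lt_iota x h : x <= h -> count (fun i => i < x) (iota 0 h) = x.
Proof.
move=> Hx; rewrite -(subnKC Hx) iotaD count_cat add0n.
rewrite (@eq_in_count _ _ predT) ?count_predT ?size_iota; last by move=> i; rewrite mem_iota.
rewrite (@eq_in_count _ _ pred0) ?count_pred0 ?addn0 // => i; rewrite mem_iota /=; lia.
Qed.

Lemma count_addE (T : Type) (a b c : pred T) (l : seq T) :
  (forall x, (c x : nat) = a x + b x) -> count c l = count a l + count b l.
Proof. by move=> H; elim: l => [|x l IH] //=; rewrite IH H; lia. Qed.

Lemma sumn_conj_gen (s : seq nat) h : all (fun x => x <= h) s ->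
  sumn [seq count (fun x => i < x) s | i <- iota 0 h] = sumn s.
Proof.
elim: s => [|x s IH] /=.
  by move=> _; elim: (iota 0 h) => //.
case/andP=> Hx Hs; rewrite -IH //.
have -> : forall l : seq nat, sumn [seq (i < x) + count (fun x0 => i < x0) s | i <- l] =
  sumn [seq nat_of_bool (i < x) | i <- l] + sumn [seq count (fun x0 => i < x0) s | i <- l].
  by elim => [|i l IHl] //=; rewrite IHl; lia.
by rewrite sumn_count count_lt_iota.
Qed.

Lemma conj_key (s : seq nat) i j : sorted geq s ->
  (j < count (fun x => i < x) s) = (i < nth 0 s j).
Proof.
elim: s j => [|x t IH] j /=; first by rewrite nth_nil ltn0.
move=> Hs; have St := path_sorted Hs; have At := order_path_min geq_trans Hs.
case: (ltnP i x) => Hix.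
  case: j => [|j] //=; rewrite add1n ltnS; exact: IH.
have -> : count (fun x0 => i < x0) t = 0.
  apply/eqP; rewrite -leqn0 leqNgt -has_count; apply/hasPn => z Hz.
  by have := allP At z Hz => /= Hz'; rewrite -leqNgt (leq_trans Hz').
rewrite ltn0; apply/esym/negbTE; rewrite -leqNgt.
case: j => [|j] //=.
case: (ltnP j (size t)) => Hj; last by rewrite nth_default.
by apply: leq_trans Hix; exact: (allP At _ (mem_nth 0 Hj)).
Qed.

Lemma conj_part n s : is_part n s -> is_part n (pconj s).
Proof.
case/and3P=> Ss Ps /eqP Hs; apply/and3P; split.
- rewrite /pconj sorted_map; apply: sub_sorted (iota_sorted 0 _) => i j /= Hij.
  by apply: sub_count => x /=; apply: leq_ltn_trans.
- apply/allP => c /mapP[i]; rewrite mem_iota add0n => Hi ->.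
  rewrite -has_count; apply/hasP; exists (head 0 s) => //.
  by case: s Ss Ps Hs Hi => //= x s _ _ _ _; rewrite in_cons eqxx.
- by rewrite /pconj sumn_conj_gen ?Hs // sorted_geq_head.
Qed.

Lemma size_conj s : size (pconj s) = head 0 s.
Proof. by rewrite size_map size_iota. Qed.

Lemma head_conj n s : is_part n s -> head 0 (pconj s) = size s.
Proof.
case: s => [|x s] //= /and3P[_ /= /andP[Hx Ps] _].
rewrite /pconj /=; case: x Hx => // x _ /=.
by rewrite add1n; congr S; apply/eqP; rewrite -all_count.
Qed.

Lemma conjK n s : is_part n s -> pconj (pconj s) = s.
Proof.
move=> Hp; have Ss : sorted geq s by case/and3P: Hp.
have Hh := sorted_geq_head Ss.
rewrite {1}/pconj (head_conj Hp).
rewrite [RHS](_ : s = mkseq (nth 0 s) (size s)); last by rewrite mkseq_nth.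
rewrite /mkseq; apply/eq_in_map => j.
rewrite mem_iota add0n => Hj.
rewrite /pconj count_map /preim /=.
rewrite (eq_count (a2 := fun i => i < nth 0 s j)); last by move=> i /=; rewrite conj_key.
by apply: count_lt_iota; exact: (allP Hh _ (mem_nth 0 Hj)).
Qed.

Definition imP (y : seq nat) := size y <= (head 0 y).+1.
Definition AP (y : seq nat) := (size y).+2 <= head 0 y.
Definition CP (y : seq nat) := (head 0 y).+2 <= size y.
Definition EP (y : seq nat) := (head 0 y <= (size y).+1) && (size y <= (head 0 y).+1).

Lemma two_I n : 2 * count imP (parts n) <= size (parts n) + count EP (parts n).
Proof.
have H1 : count imP (parts n) = count AP (parts n) + count EP (parts n).
  by apply: count_addE => y; rewrite /imP /AP /EP; case: leqP; case: leqP; case: leqP => //=; lia.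
have H2 : size (parts n) = count imP (parts n) + count CP (parts n).
  rewrite -count_predT; apply: count_addE => y; rewrite /imP /CP /=.
  by case: leqP; case: leqP => //=; lia.
have H3 : count AP (parts n) <= count CP (parts n).
  apply: (@count_inj _ _ _ _ _ _ pconj (uniq_parts n)).
    move=> s t; rewrite !mem_parts => Hs _ Ht _ E.
    by rewrite -(conjK Hs) -(conjK Ht) E.
  move=> s; rewrite mem_parts => Hs; rewrite /AP /CP mem_parts (conj_part Hs) /=.
  by rewrite (head_conj Hs) size_conj.
lia.
Qed.

Lemma bulg_imP n s : 0 < n -> is_part n s -> imP (bulg s).
Proof.
move=> Hn Hs; rewrite /imP.
have Hsb : size (bulg s) <= (size s).+1.
  rewrite size_sort size_filter /=.
  by rewrite -(size_map predn s); have := count_size (fun x => 0 < x) (map predn s); case: (0 < size s); lia.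
have Hm : size s \in bulg s by rewrite mem_sort mem_filter /= (part_size_gt0 Hn Hs) in_cons eqxx.
have Ss : sorted geq (bulg s) by exact: (sort_sorted geq_total _).
have := allP (sorted_geq_head Ss) _ Hm => /= H.
by apply: leq_trans Hsb _; rewrite ltnS.
Qed.

Lemma sum_fibers (X Y : finType) (f : X -> Y) : \sum_(y : Y) #|[set x | f x == y]| = #|X|.
Proof.
rewrite -sum1_card (partition_big f xpredT) //=; apply: eq_bigr => y _.
by rewrite -sum1_card; apply: eq_bigl => x; rewrite inE.
Qed.

Lemma deg_lower_nat n : 0 < n ->
  3 * size (parts n) <= \sum_(y : Part n) #|[set x : Part n | B x == y]| ^ 2 + 2 * count imP (parts n).
Proof.
move=> Hn.
have Hs : \sum_(y : Part n) #|[set x : Part n | B x == y]| = size (parts n).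
  by rewrite sum_fibers card_Part.
have Hi : \sum_(y : Part n) nat_of_bool (0 < #|[set x : Part n | B x == y]|) <= count imP (parts n).
  rewrite -(@card_setP n imP) -sum1_card [X in _ <= X]big_mkcond /=; apply: leq_sum => y _.
  rewrite inE; case: (ltnP 0) => //= /card_gt0P[x]; rewrite inE => /eqP <-.
  by rewrite (bulg_imP Hn) // -mem_parts (ssvalP x).
have Hp : forall k : nat, 3 * k <= k ^ 2 + 2 * nat_of_bool (0 < k).
  by case=> [|k] //=; nia.
apply: leq_trans (_ : \sum_(y : Part n) (#|[set x : Part n | B x == y]| ^ 2 +
   2 * nat_of_bool (0 < #|[set x : Part n | B x == y]|)) <= _).
  by rewrite -Hs big_distrr /=; apply: leq_sum => y _; apply: Hp.
by rewrite big_split /= -big_distrr /= leq_add2l leq_mul2l Hi orbT.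
Qed.

Lemma count_le1 (I : seq nat) (Q : pred nat) : uniq I ->
  (forall i j, Q i -> Q j -> i = j) -> count Q I <= 1.
Proof.
move=> UI HQ; case Hf : (seq.filter Q I) => [|i0 l].
  by rewrite -size_filter Hf.
rewrite -size_filter Hf.
have : size (i0 :: l) <= size [:: i0].
  apply: uniq_leq_size; first by rewrite -Hf filter_uniq.
  move=> z Hz; have : z \in seq.filter Q I by rewrite Hf.
  have : i0 \in seq.filter Q I by rewrite Hf mem_head.
  rewrite !mem_filter => /andP[Q0 _] /andP[Qz _].
  by rewrite mem_seq1 (HQ _ _ Qz Q0).
by [].
Qed.

Lemma sum_count_excl (T : Type) (l : seq T) (I : seq nat) (P : nat -> pred T) :
  (forall x, \sum_(i <- I) nat_of_bool (P i x) <= 1) ->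
  \sum_(i <- I) count (P i) l <= size l.
Proof.
move=> H.
have -> : \sum_(i <- I) count (P i) l = \sum_(x <- l) \sum_(i <- I) nat_of_bool (P i x).
  rewrite exchange_big /=; apply: eq_bigr => i _; by rewrite sum_nat_bool.
by rewrite -sum1_size; apply: leq_sum => x _; apply: H.
Qed.

Lemma sum_bool_count (I : seq nat) (Q : pred nat) : \sum_(i <- I) nat_of_bool (Q i) = count Q I.
Proof. exact: sum_nat_bool. Qed.

Definition ones (s : seq nat) := count (pred1 1) s.

Lemma sorted_split1 (u : seq nat) : sorted geq u -> all (fun x => 0 < x) u ->
  u = seq.filter (fun x => 1 < x) u ++ nseq (count (pred1 1) u) 1.
Proof.
elim: u => [|x u IH] //= Hs /andP[Hx Pu].
have Hu : sorted geq u := path_sorted Hs.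
case: x Hx Hs => [|[|x]] // _ Hs /=.
  have Ha := order_path_min geq_trans Hs.
  have H0 : all (pred1 1) u.
    by apply/allP => y Hy; have := allP Ha y Hy; have := allP Pu y Hy => /=; lia.
  rewrite (@eq_in_filter _ _ pred0) ?filter_pred0; last by move=> y /(allP H0) /= /eqP ->.
  have Hc : count (pred1 1) u = size u by apply/eqP; rewrite -all_count.
  by rewrite Hc add0n /= -(all_pred1P _ _ H0).
by rewrite add0n -IH.
Qed.

Lemma ones_suffix (t : seq nat) j : sorted geq t -> all (fun x => 0 < x) t ->
  j <= ones t -> drop (size t - j) t = nseq j 1.
Proof.
move=> St Pt Hj; rewrite /ones in Hj.
rewrite (sorted_split1 St Pt); set f := seq.filter _ t; set c := count _ t.
have Hc : j <= c := Hj; clearbody f c.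
rewrite size_cat size_nseq drop_cat.
case: ltnP => H; first by lia.
by rewrite drop_nseq; congr nseq; lia.
Qed.

Definition hook j (s : seq nat) :=
  if s is x :: t then (x + j) :: take (size t - j) t else [::].

Lemma hook_props n s j : is_part n s -> j < ones s ->
  [/\ is_part n (hook j s), head 0 (hook j s) = head 0 s + j & size (hook j s) + j = size s].
Proof.
case: s => [|x t] // /and3P[Ss /= /andP[Px Pt] /eqP Hsum] Hj.
have St := path_sorted Ss; have At := order_path_min geq_trans Ss.
have Hjt : j <= ones t.
  move: Hj; rewrite /ones /=; case: (x == 1) => /=; lia.
have Hsz : j <= size t by apply: leq_trans Hjt (count_size _ _).
have Hd := ones_suffix St Pt Hjt.
split => //=; last by rewrite size_take; case: ifP => H; clear -H Hsz; lia.
apply/and3P; split.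
- rewrite /= (path_sortedE geq_trans) take_sorted // andbT.
  apply/allP => z /mem_take Hz; have := allP At z Hz => /=; lia.
- by rewrite /= addn_gt0 Px /=; apply/allP => z /mem_take Hz; exact: (allP Pt z Hz).
- have E : sumn t = sumn (take (size t - j) t) + j.
    by rewrite -{1}(cat_take_drop (size t - j) t) Hd sumn_cat sumn_nseq mul1n.
  by rewrite /= -Hsum E eqn_leq; apply/andP; split; lia.
Qed.

Lemma hook_inj n m s s' j : is_part n s -> is_part m s' -> j < ones s -> j < ones s' ->
  hook j s = hook j s' -> s = s'.
Proof.
case: s => [|x t] //; case: s' => [|x' t'] //.
move=> /and3P[Ss /= /andP[_ Pt] _] /and3P[Ss' /= /andP[_ Pt'] _] Hj Hj' [E1 E2].
have Hjt : j <= ones t by move: Hj; rewrite /ones /=; case: (x == 1) => /=; lia.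
have Hjt' : j <= ones t' by move: Hj'; rewrite /ones /=; case: (x' == 1) => /=; lia.
have -> : x = x' by lia.
congr cons.
rewrite -(cat_take_drop (size t - j) t) -(cat_take_drop (size t' - j) t') E2.
by rewrite (ones_suffix (path_sorted Ss) Pt Hjt) (ones_suffix (path_sorted Ss') Pt' Hjt').
Qed.

Definition Cls a b (y : seq nat) := size y + a == head 0 y + b.

Lemma sum_const_iota K X : \sum_(j <- iota 0 K) X = K * X.
Proof. by rewrite big_const_seq count_predT size_iota iter_addn_0 mulnC. Qed.

Lemma cls_bound n a b K :
  K * count (Cls a b) (parts n) <= size (parts n) + K * count (fun y => ones y <= K) (parts n).
Proof.
have H1 : count (Cls a b) (parts n) <=
   count (fun y => Cls a b y && (K < ones y)) (parts n) + count (fun y => ones y <= K) (parts n).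
  rewrite -count_predUI; apply: leq_trans (leq_addr _ _).
  by apply: sub_count => y /= ->; case: ltnP.
have H2 : K * count (fun y => Cls a b y && (K < ones y)) (parts n) <= size (parts n).
  rewrite -sum_const_iota.
  apply: leq_trans (_ : \sum_(j <- iota 0 K) count (Cls (a + 2 * j) b) (parts n) <= _).
    rewrite big_seq [X in _ <= X]big_seq; apply: leq_sum => j; rewrite mem_iota add0n => HjK.
    apply: (@count_inj _ _ _ _ _ _ (hook j) (uniq_parts n)).
      move=> s t; rewrite !mem_parts => Hs /andP[_ Ks] Ht /andP[_ Kt].
      by apply: hook_inj Hs Ht _ _; apply: leq_trans HjK _; apply: ltnW.
    move=> s; rewrite mem_parts => Hs /andP[Cs Ks].
    have [Hp Hh Hz] := hook_props Hs (leq_trans HjK (ltnW Ks)).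
    rewrite mem_parts Hp /= /Cls Hh; move: Cs; rewrite /Cls => /eqP Cs.
    by apply/eqP; lia.
  apply: sum_count_excl => y; rewrite sum_bool_count.
  apply: count_le1; first exact: iota_uniq.
  by move=> i j /= /eqP Hi /eqP Hj; lia.
apply: leq_trans (_ : K * (count (fun y => Cls a b y && (K < ones y)) (parts n) +
   count (fun y => ones y <= K) (parts n)) <= _).
  by rewrite leq_mul2l H1 orbT.
by rewrite mulnDr leq_add2r.
Qed.

Lemma head_sort_ge (l : seq nat) v : v \in l -> v <= head 0 (sort geq l).
Proof.
move=> Hv; have := sorted_geq_head (sort_sorted geq_total l).
by move/allP/(_ v); rewrite mem_sort; apply.
Qed.

Lemma head_sort_le (l : seq nat) M : all (fun v => v <= M) l -> head 0 (sort geq l) <= M.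
Proof.
move=> Hl; case Es : (sort geq l) => [|h r] //=.
have : h \in sort geq l by rewrite Es mem_head.
by rewrite mem_sort => /(allP Hl).
Qed.

Definition psi i (s : seq nat) := sort geq ((head 0 s - i) :: behead s ++ nseq i 1).
Definition psitag i (s : seq nat) := head 0 (psi i s) - (head 0 s - i).

Lemma psi_bound n k i :
  count (fun y => (ones y == k) && (i.+2 <= head 0 y)) (parts n) <=
  i.+1 * count (fun y => ones y == k + i) (parts n).
Proof.
apply: (@count_inj_tag _ _ _ _ _ _ (psi i) (psitag i) _ (uniq_parts n)).
  move=> s s'; rewrite !mem_parts => Hs /andP[_ Hx] Hs' /andP[_ Hx'].
  case: s Hs Hx => [|x t] //; case: s' Hs' Hx' => [|x' t'] //.
  move=> /and3P[Ss' _ _] Hx' /and3P[Ss _ _] Hx Ef Eg.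
  move: Eg; rewrite /psitag Ef /= => Eg.
  have Hge : x - i <= head 0 (psi i (x' :: t')) by rewrite -Ef head_sort_ge // mem_head.
  have Hge' : x' - i <= head 0 (psi i (x' :: t')) by rewrite head_sort_ge // mem_head.
  have Exx : x = x' by move: Hx Hx' Hge Hge' Eg => /=; lia.
  subst x'; congr cons.
  move/(perm_sortP geq_total geq_trans geq_anti): Ef.
  rewrite perm_cons perm_cat2r => Pt.
  exact: (sorted_eq geq_trans geq_anti (path_sorted Ss) (path_sorted Ss') Pt).
move=> s; rewrite mem_parts => Hs /andP[Ho Hx]; case: s Hs Ho Hx => [|x t] //.
move=> /and3P[Ss /= /andP[Px Pt] /eqP Hsum] /eqP Ho Hx.
have At := order_path_min geq_trans Ss.
have Pe := permEl (perm_sort geq ((x - i) :: t ++ nseq i 1)).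
apply/and3P; split.
- rewrite mem_parts; apply/and3P; split.
  + exact: sort_sorted geq_total _.
  + rewrite /psi (perm_all _ Pe) /= all_cat Pt /=.
    apply/andP; split; first by lia.
    by apply/allP => z; rewrite mem_nseq => /andP[_ /eqP ->].
  + by rewrite /psi (perm_sumn Pe) /= sumn_cat sumn_nseq -Hsum; apply/eqP; lia.
- rewrite /ones /psi (permP Pe) /= count_cat count_nseq /= -Ho /ones /=.
  have -> : (x - i == 1) = false by apply/negbTE; lia.
  have -> : (x == 1) = false by apply/negbTE; lia.
  by rewrite /= mul1n.
- rewrite /psitag /=.
  have : head 0 (psi i (x :: t)) <= x.
    apply: head_sort_le => /=; apply/andP; split; first by lia.
    rewrite all_cat; apply/andP; split; first by apply: sub_all At => z /=.
    by apply/allP => z; rewrite mem_nseq => /andP[_ /eqP ->]; lia.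
  move: (head 0 _) => h H; clear -H Hx; lia.
Qed.

Definition cc n k := count (fun y => ones y == k) (parts n).
Definition ss n L := count (fun y => head 0 y <= L) (parts n).

Lemma ss_mono n L L' : L <= L' -> ss n L <= ss n L'.
Proof. by move=> H; apply: sub_count => y /= H'; apply: leq_trans H' H. Qed.

Lemma ck_step n k i : cc n k <= i.+1 * cc n (k + i) + ss n i.+1.
Proof.
apply: leq_trans (_ : count (fun y => (ones y == k) && (i.+2 <= head 0 y)) (parts n) + ss n i.+1 <= _).
  rewrite /cc /ss -count_predUI; apply: leq_trans (leq_addr _ _).
  by apply: sub_count => y /= ->; case: ltnP.
by rewrite leq_add2r psi_bound.
Qed.

Lemma sum_const_seq (l : seq nat) X : \sum_(i <- l) X = size l * X.
Proof. by rewrite big_const_seq count_predT iter_addn_0 mulnC. Qed.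

Lemma block_step n k r L : 2 ^ r.+1 <= L ->
  cc n k <= 2 * \sum_(i <- iota (2 ^ r) (2 ^ r)) cc n (k + i) + ss n L.
Proof.
move=> HL.
have Hpos : 0 < 2 ^ r by rewrite expn_gt0.
rewrite -(leq_pmul2l Hpos) mulnDr mulnA -expnSr.
have -> : 2 ^ r * cc n k = \sum_(i <- iota (2 ^ r) (2 ^ r)) cc n k.
  by rewrite sum_const_seq size_iota.
have -> : 2 ^ r * ss n L = \sum_(i <- iota (2 ^ r) (2 ^ r)) ss n L.
  by rewrite sum_const_seq size_iota.
rewrite big_distrr /= -big_split /= big_seq [X in _ <= X]big_seq.
apply: leq_sum => i; rewrite mem_iota => /andP[H1 H2].
apply: leq_trans (ck_step n k i) _; apply: leq_add.
  by rewrite leq_mul2r; apply/orP; right; rewrite expnS mul2n -addnn.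
by apply: ss_mono; apply: leq_trans HL; rewrite expnS mul2n -addnn.
Qed.

Lemma iota_blocks (F : nat -> nat) R :
  \sum_(r <- iota 0 R) \sum_(i <- iota (2 ^ r) (2 ^ r)) F i = \sum_(i <- iota 1 (2 ^ R).-1) F i.
Proof.
elim: R => [|R IH]; first by rewrite expn0 /= !big_nil.
rewrite -addn1 iotaD big_cat /= IH big_seq1 add0n.
have H : 0 < 2 ^ R by rewrite expn_gt0.
have -> : (2 ^ (R + 1)).-1 = (2 ^ R).-1 + 2 ^ R by rewrite addn1 expnS; lia.
by rewrite iotaD big_cat /= add1n prednK.
Qed.

Lemma sum_cc_le n k (I : seq nat) : uniq I -> \sum_(i <- I) cc n (k + i) <= size (parts n).
Proof.
move=> UI; apply: (@sum_count_excl _ _ I (fun i y => ones y == k + i)) => y.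
rewrite sum_bool_count; apply: count_le1 => // i j /= /eqP Hi /eqP Hj; lia.
Qed.

Lemma blocks_sum n k R : R * cc n k <= 2 * size (parts n) + R * ss n (2 ^ R).
Proof.
have -> : R * cc n k = \sum_(r <- iota 0 R) cc n k by rewrite sum_const_seq size_iota.
have -> : R * ss n (2 ^ R) = \sum_(r <- iota 0 R) ss n (2 ^ R) by rewrite sum_const_seq size_iota.
apply: leq_trans (_ : \sum_(r <- iota 0 R)
   (2 * \sum_(i <- iota (2 ^ r) (2 ^ r)) cc n (k + i) + ss n (2 ^ R)) <= _).
  rewrite big_seq [X in _ <= X]big_seq; apply: leq_sum => r; rewrite mem_iota add0n => Hr.
  by apply: block_step; rewrite leq_pexp2l.
rewrite big_split /= -big_distrr /= leq_add2r leq_mul2l; apply/orP; right.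
by rewrite (iota_blocks (fun i => cc n (k + i))) sum_cc_le ?iota_uniq.
Qed.

Lemma ones_le_sum n K : count (fun y => ones y <= K) (parts n) = \sum_(k <- iota 0 K.+1) cc n k.
Proof.
rewrite /cc; have -> : \sum_(k <- iota 0 K.+1) count (fun y => ones y == k) (parts n) =
   \sum_(y <- parts n) \sum_(k <- iota 0 K.+1) nat_of_bool (ones y == k).
  by rewrite exchange_big /=; apply: eq_bigr => k _; rewrite sum_nat_bool.
rewrite -sum_nat_bool; apply: eq_bigr => y _.
rewrite sum_bool_count (@eq_count _ _ (pred1 (ones y))); last by move=> z /=; rewrite eq_sym.
by rewrite count_uniq_mem ?iota_uniq // mem_iota add0n ltnS.
Qed.

Lemma ones_bound n K R : R * count (fun y => ones y <= K) (parts n) <=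
  K.+1 * (2 * size (parts n) + R * ss n (2 ^ R)).
Proof.
rewrite ones_le_sum big_distrr /= -[K.+1](size_iota 0) -sum_const_seq.
by apply: leq_sum => k _; apply: blocks_sum.
Qed.

Lemma size_le_sumn (s : seq nat) : all (fun x => 0 < x) s -> size s <= sumn s.
Proof. by elim: s => [|x s IH] //= /andP[Hx /IH]; lia. Qed.

Lemma ss_upper n L : ss n L <= n.+1 ^ L.
Proof.
have -> : n.+1 ^ L = count predT (enum {ffun 'I_L -> 'I_n.+1}).
  by rewrite count_predT -cardE card_ffun !card_ord.
pose f (y : seq nat) := [ffun i : 'I_L => (inord (count (pred1 i.+1) y) : 'I_n.+1)].
apply: (@count_inj _ _ _ _ _ _ f (uniq_parts n)); last first.
  by move=> y _ _; rewrite mem_enum.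
have Hc : forall y, is_part n y -> forall v, count (pred1 v) y <= n.
  move=> y /and3P[_ Py /eqP Hs] v; rewrite -Hs.
  by apply: leq_trans (count_size _ _) (size_le_sumn Py).
move=> y y'; rewrite !mem_parts => Hy /= Hl Hy' /= Hl' Ef.
case/and3P: (Hy) => Ss Ps _; case/and3P: (Hy') => Ss' Ps' _.
have Hz : forall z, is_part n z -> head 0 z <= L -> forall v, ~~ (0 < v <= L) -> count (pred1 v) z = 0.
  move=> z /and3P[Sz Pz _] Hlz v Hv; apply/eqP; rewrite -leqn0 leqNgt -has_count.
  apply/hasPn => x Hx /=; apply/negP => /eqP Exv; move: Hv; rewrite -Exv.
  by rewrite (allP Pz x Hx) /= (leq_trans _ Hlz) //; exact: (allP (sorted_geq_head Sz) x Hx).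
apply: (sorted_eq geq_trans geq_anti Ss Ss').
rewrite /perm_eq; apply/allP => v _ /=; apply/eqP.
case: (boolP (0 < v <= L)) => Hv; last by rewrite (Hz _ Hy Hl v Hv) (Hz _ Hy' Hl' v Hv).
have Hvl : v.-1 < L by move: Hv; lia.
have := congr1 (fun g : {ffun 'I_L -> 'I_n.+1} => nat_of_ord (g (Ordinal Hvl))) Ef.
rewrite /f !ffunE /= !inordK ?ltnS ?Hc //.
by rewrite prednK //; case/andP: Hv.
Qed.

Section Lower.
Variables n L : nat.
Let N := n %/ (L.+2)^2.

Definition fl (f : {ffun 'I_L.+1 -> 'I_N.+1}) :=
  flatten [seq nseq (f i : nat) (i : nat).+2 | i <- enum 'I_L.+1].

Lemma sumn_enum (F : 'I_L.+1 -> nat) : sumn [seq F i | i <- enum 'I_L.+1] = \sum_(i < L.+1) F i.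
Proof. by rewrite sumnE big_map big_enum. Qed.

Lemma count_fl f (j : 'I_L.+1) : count (pred1 (j : nat).+2) (fl f) = f j.
Proof.
rewrite /fl count_flatten -map_comp sumn_enum (bigD1 j) //= count_nseq /= eqxx mul1n.
rewrite big1 ?addn0 // => i Hij; rewrite count_nseq /=.
by case: eqP => // [[/val_inj Eij]]; rewrite Eij eqxx in Hij.
Qed.

Lemma sumn_fl f : sumn (fl f) <= n.
Proof.
rewrite /fl sumn_flatten -map_comp sumn_enum.
apply: leq_trans (_ : \sum_(i < L.+1) (L.+2 * N) <= _).
  apply: leq_sum => i _; rewrite /= sumn_nseq; apply: leq_mul; first by rewrite ltnS ltn_ord.
  by rewrite -ltnS.
rewrite sum_nat_const card_ord.
apply: leq_trans (_ : (L.+2)^2 * N <= _); first by rewrite mulnA leq_mul2r; apply/orP; right; rewrite leq_mul2r ltnW ?orbT.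
by rewrite mulnC leq_divM.
Qed.
End Lower.

Lemma ss_lower n L : (n %/ (L.+2)^2).+1 ^ L.+1 <= size (parts n).
Proof.
set N := n %/ (L.+2)^2.
have -> : N.+1 ^ L.+1 = count predT (enum {ffun 'I_L.+1 -> 'I_N.+1}).
  by rewrite count_predT -cardE card_ffun !card_ord.
rewrite -count_predT.
pose g (f : {ffun 'I_L.+1 -> 'I_N.+1}) := sort geq (fl f ++ nseq (n - sumn (fl f)) 1).
apply: (@count_inj _ _ _ _ _ _ g (enum_uniq _)).
  move=> f f' _ _ _ _ Eg; apply/ffunP => j; apply: val_inj => /=.
  have := congr1 (count (pred1 (j : nat).+2)) Eg.
  rewrite /g !(permP (permEl (perm_sort _ _))) !count_cat !count_nseq /= !count_fl.
  by rewrite !mul0n !addn0.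
move=> f0 _ _; rewrite mem_parts andbT /g; move: f0 => f.
have Pe := permEl (perm_sort geq (fl f ++ nseq (n - sumn (fl f)) 1)).
apply/and3P; split.
- exact: sort_sorted geq_total _.
- rewrite (perm_all _ Pe) all_cat; apply/andP; split.
    apply/allP => z /flattenP[l /mapP[i _ ->]]; by rewrite mem_nseq => /andP[_ /eqP ->].
  by apply/allP => z; rewrite mem_nseq => /andP[_ /eqP ->].
- rewrite (perm_sumn Pe) sumn_cat sumn_nseq mul1n subnKC //; exact: sumn_fl.
Qed.

Lemma ss_bound n L : ss n L * n.+1 <= ((L.+2)^2) ^ L.+1 * size (parts n).
Proof.
set c := (L.+2)^2; set N := n %/ c.
have Hc : 0 < c by rewrite expn_gt0.
have H1 : n.+1 <= c * N.+1.
  have := ltn_pmod n Hc; have := divn_eq n c; rewrite -/N; nia.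
apply: leq_trans (_ : n.+1 ^ L * n.+1 <= _).
  by rewrite leq_mul2r ss_upper orbT.
rewrite -expnSr; apply: leq_trans (_ : (c * N.+1) ^ L.+1 <= _).
  by rewrite leq_exp2r.
by rewrite expnMn leq_mul2l ss_lower orbT.
Qed.

Lemma EP_le n : count EP (parts n) <=
  count (Cls 0 1) (parts n) + count (Cls 0 0) (parts n) + count (Cls 1 0) (parts n).
Proof.
elim: (parts n) => [|y l IH] //=.
have : (EP y : nat) <= Cls 0 1 y + Cls 0 0 y + Cls 1 0 y.
  rewrite /EP /Cls; case: leqP; case: leqP; case: eqP; case: eqP; case: eqP => //=; lia.
lia.
Qed.

Lemma EP_small m : 0 < m -> exists N0, forall n, N0 <= n -> m * count EP (parts n) <= size (parts n).
Proof.
move=> Hm.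
set K := 6 * m; set R := 24 * m * K.+1; set C := ((2 ^ R).+2 ^ 2) ^ (2 ^ R).+1.
exists (C * R) => n Hn.
set p := size (parts n); set o := count (fun y => ones y <= K) (parts n).
set s := ss n (2 ^ R).
have HC : 0 < C by rewrite expn_gt0 expn_gt0.
have Hs : s * n.+1 <= C * p by exact: ss_bound.
have HRs : R * s <= p.
  have HCR : C * R <= n.+1 by apply: leq_trans Hn _.
  rewrite -(leq_pmul2l HC); apply: leq_trans Hs; rewrite mulnA mulnC.
  by rewrite leq_mul2l HCR orbT.
have Ho : R * o <= K.+1 * (2 * p + R * s) by exact: ones_bound.
have Ho' : 8 * m * o <= p.
  have : K.+1 * (24 * m * o) <= K.+1 * (3 * p).
    apply: leq_trans (_ : R * o <= _); first by rewrite /R; lia.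
    apply: leq_trans Ho _; rewrite leq_mul2l; apply/orP; right; lia.
  rewrite leq_mul2l /= => H; lia.
have H1 := cls_bound n 0 1 K; have H2 := cls_bound n 0 0 K; have H3 := cls_bound n 1 0 K.
have HE := EP_le n.
rewrite -/p -/o in H1 H2 H3 HE.
move: H1 H2 H3 HE Ho'; rewrite /K; nia.
Qed.

Import Order.TTheory GRing.Theory Num.Theory.
Local Open Scope ring_scope.

Lemma p_gt0 n : (0 < n)%N -> (0 < size (parts n))%N.
Proof.
move=> Hn; have : [:: n] \in parts n by rewrite mem_parts /is_part /= addn0 Hn eqxx.
by case: (parts n).
Qed.

Lemma ratr_degB (R : realType) n :
  (ratr (degB n) : R) =
  (\sum_(y : Part n) (#|[set x : Part n | B x == y]|%:R : R) ^+ 2) / (size (parts n))%:R.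
Proof.
rewrite /degB /deg fmorph_div rmorph_sum /= card_Part ratr_nat; congr (_ / _).
by apply: eq_bigr => y _; rewrite rmorphXn /= ratr_nat.
Qed.

Lemma sum_fibers_R (R : realType) n :
  \sum_(y : Part n) (#|[set x : Part n | B x == y]|%:R : R) = (size (parts n))%:R.
Proof. by rewrite -natr_sum sum_fibers card_Part. Qed.

Lemma floor_bound (R : realType) n d : (3 * (d * d.-1) <= 2 * n)%N ->
  (d%:R : R) <= (Num.floor ((1 + Num.sqrt ((8 / 3) * n%:R + 1 : R)) / 2 : R))%:~R.
Proof.
move=> H.
have -> : (d%:R : R) = (d%:Z)%:~R by rewrite pmulrn.
rewrite ler_int floor_ge_int /= -pmulrn.
set X := (8 / 3) * n%:R + 1 : R.
have Hs0 : 0 <= Num.sqrt X by apply: sqrtr_ge0.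
have Hn0 : 0 <= n%:R :> R by apply: ler0n.
case: d H => [|d] H; first by rewrite ler_pdivlMr //; lra.
have Hr : (3 * (d.+1 * d))%:R <= (2 * n)%:R :> R by rewrite ler_nat.
rewrite !natrM in Hr.
have HX : (2 * d%:R + 1) ^+ 2 <= X.
  rewrite /X; rewrite -[d.+1]addn1 natrD in Hr; lra.
have Hq : 2 * d%:R + 1 <= Num.sqrt X.
  have := HX; rewrite -ler_sqrt; last by rewrite /X; lra.
  by rewrite sqrtr_sqr ger0_norm //; lra.
by rewrite ler_pdivlMr // -[d.+1]addn1 natrD; lra.
Qed.

Lemma upper_part (R : realType) n : (0 < n)%N ->
  (ratr (degB n) : R) <=
       (Num.floor ((1 + Num.sqrt ((8 / 3) * n%:R + 1 : R)) / 2 : R))%:~R.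
Proof.
move=> Hn; set F := (Num.floor _)%:~R.
have Hp : 0 < (size (parts n))%:R :> R by rewrite ltr0n p_gt0.
have Hy : forall y : Part n, (#|[set x : Part n | B x == y]|%:R : R) <= F.
  move=> y; have Hd : is_part n (ssval y) by rewrite -mem_parts (ssvalP y).
  apply: le_trans (@floor_bound R n _ (dval_bound Hd)).
  by rewrite ler_nat fiber_le.
rewrite ratr_degB ler_pdivrMr // -sum_fibers_R mulr_sumr.
apply: ler_sum => y _; rewrite expr2 mulrC; apply: ler_wpM2r => //.
Qed.

Lemma lower_arith (R : realType) (S E p m : nat) : (0 < p)%N -> (0 < m)%N ->
  (2 * p <= S + E)%N -> (m * E <= p)%N -> 2 - m%:R^-1 <= S%:R / p%:R :> R.
Proof.
move=> Hp0 Hm0 HS HE.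
have Hp : 0 < p%:R :> R by rewrite ltr0n.
have HSr : 2 * p%:R <= S%:R + E%:R :> R by rewrite -natrM -natrD ler_nat.
have Hmr : 0 < m%:R :> R by rewrite ltr0n.
have HE' : E%:R <= p%:R / m%:R :> R by rewrite ler_pdivlMr // mulrC -natrM ler_nat.
rewrite ler_pdivlMr //.
have -> : (2 - m%:R^-1) * p%:R = 2 * p%:R - p%:R / m%:R :> R by rewrite mulrBl [m%:R^-1 * _]mulrC.
lra.
Qed.

Lemma ratr_degB_nat (R : realType) n :
  (ratr (degB n) : R) =
  ((\sum_(y : Part n) #|[set x : Part n | B x == y]| ^ 2)%N)%:R / (size (parts n))%:R.
Proof.
rewrite ratr_degB natr_sum; congr (_ / _); apply: eq_bigr => y _.
by rewrite natrX.
Qed.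

Lemma lower_part (R : realType) (m : nat) : (0 < m)%N ->
  exists N0, forall n, (N0 <= n)%N -> 2 - m%:R^-1 <= (ratr (degB n) : R).
Proof.
move=> Hm; have [N0 HN] := EP_small Hm.
exists (N0.+1) => n Hn.
have Hn0 : (0 < n)%N by apply: leq_trans Hn.
have HE := HN n (ltnW Hn).
have H1 := deg_lower_nat Hn0; have H2 := two_I n.
rewrite ratr_degB_nat; apply: (@lower_arith R _ (count EP (parts n))) => //; first exact: p_gt0.
lia.
Qed.

Lemma liminf_ge (R : realType) (u : nat -> R) (c : R) :
  (forall e : R, 0 < e -> exists N, forall n, (N <= n)%N -> c - e <= u n) ->
  (c%:E <= limn_einf (fun n => (u n)%:E))%E.
Proof.
move=> H; apply/lee_subgt0Pr => e e0.
have [N HN] := H e e0.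
rewrite limn_einf_lim; apply: lime_ge; first exact: is_cvg_einfs.
near=> m; apply: le_ereal_inf_tmp => _ [k /= mk <-].
rewrite -EFinB lee_fin; apply: HN; apply: leq_trans mk.
by near: m; exists N.
Unshelve. all: by end_near. Qed.

Theorem mainTheorem14 (R : realType) :
  (2%:E <= limn_einf (fun n : nat => (ratr (degB n) : R)%:E))%E /\
  (forall n : nat, (0 < n)%N ->
     (ratr (degB n) : R) <=
       (Num.floor ((1 + Num.sqrt ((8 / 3) * n%:R + 1 : R)) / 2 : R))%:~R).
Proof.
split; last by move=> n Hn; exact: upper_part.
apply: liminf_ge => e e0.
have ei0 : 0 <= e^-1 by rewrite invr_ge0 ltW.
have Hb := Num.Theory.archi_boundP ei0.
set m := Num.bound (e^-1) in Hb.
have Hm0 : 0 < m%:R :> R by apply: le_lt_trans Hb.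
have Hm : (0 < m)%N by rewrite -(ltr0n R).
have [N0 HN] := @lower_part R m Hm.
exists N0 => n Hn; apply: le_trans (HN n Hn).
have : m%:R^-1 <= e.
  rewrite -div1r ler_pdivrMr //.
  by rewrite -(ltr_pM2l e0) mulfV ?gt_eqF // in Hb; apply: ltW.
lra.
Qed.
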